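(* Let $n\ge2$, $\omega\in\mathbb{R}^n$, $k\in\mathbb{R}_{>0}^n$ satisfy (IC1) $\sum_\mu\omega_\mu=0$, (IC2) $\omega\ne0$, (IC3) $\left|\frac{\omega_1}{k_1}\right|\le\cdots\le\left|\frac{\omega_n}{k_n}\right|$. For $\sigma\in\{-1,+1\}^n$ let $f_\sigma(R)=-R+\frac1n\sum_{\mu=1}^n\sigma_\mu\sqrt{k_\mu^2R-\omega_\mu^2}$. Let $\sigma\in\{-1,+1\}^n$ and indices $\mu,\nu$ with $\sigma_\mu=+1$, $\sigma_\nu=-1$, and let $\sigma'$ agree with $\sigma$ except that $\sigma'_\mu=-1$ and $\sigma'_\nu=+1$. Suppose $$(k_\mu^2-k_\nu^2)\left(\frac{\omega_n}{k_n}\right)^2\ge\omega_\mu^2-\omega_\nu^2\quad\text{and}\quad(k_\mu^2-k_\nu^2)\left(\frac1n\sum_{\iota=1}^nk_\iota\right)^2\ge\omega_\mu^2-\omega_\nu^2.$$ If $f_\sigma$ has no positive roots, then $f_{\sigma'}$ has no positive roots.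
   Context: Square roots are nonnegative real square roots; a positive root of $f_\sigma$ is a real $R>0$ with $k_\mu^2R-\omega_\mu^2\ge0$ for all $\mu$ and $f_\sigma(R)=0$. *)

(* Defs.v *)
From HB Require Import structures.
From mathcomp Require Import all_boot all_order all_algebra.
From mathcomp Require Import reals.
Set Implicit Arguments. Unset Strict Implicit. Unset Printing Implicit Defensive.
Import Order.TTheory GRing.Theory Num.Theory.
Local Open Scope ring_scope.

Definition f_sigma (R : realType) (n : nat) (omega k sigma : 'I_n -> R) (x : R) : R :=
  - x + n%:R^-1 * \sum_(i < n) sigma i * Num.sqrt (k i ^+ 2 * x - omega i ^+ 2).

Definition positive_root (R : realType) (n : nat) (omega k sigma : 'I_n -> R) (x : R) : Prop :=
  0 < x /\ (forall i : 'I_n, 0 <= k i ^+ 2 * x - omega i ^+ 2) /\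
  f_sigma omega k sigma x = 0.

Definition is_sign (R : realType) (n : nat) (sigma : 'I_n -> R) : Prop :=
  forall i, sigma i = 1 \/ sigma i = -1.

(* Main.v *)
Require Import Defs.
From HB Require Import structures.
From mathcomp Require Import all_boot all_order all_algebra.
From mathcomp Require Import boolp classical_sets reals topology normedtype realfun.
From mathcomp Require Import lra.
Import Order.TTheory GRing.Theory Num.Theory.
Import numFieldNormedType.Exports.
Local Open Scope ring_scope.

Section H.
Variable R : realType.

Lemma sum_cont (I : Type) (r : seq I) (F : I -> R -> R) :
  (forall i, continuous (F i)) -> continuous (fun x => \sum_(i <- r) F i x).
Proof.
move=> Fc; elim: r => [|a r IH].
  have -> : (fun x : R => \sum_(i <- [::]) F i x) = (fun=> 0).
    by apply: funext => x; rewrite big_nil.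
  by move=> x; exact: cst_continuous.
have -> : (fun x : R => \sum_(i <- a :: r) F i x) = (F a \+ fun x => \sum_(i <- r) F i x).
  by apply: funext => x; rewrite big_cons.
by move=> x; apply: continuousD; [exact: Fc| exact: IH].
Qed.

Lemma f_cont n (omega k sigma : 'I_n -> R) : continuous (f_sigma omega k sigma).
Proof.
have -> : f_sigma omega k sigma = (fun x => - x) \+ (fun x => n%:R^-1 * \sum_(i < n) sigma i * Num.sqrt (k i ^+ 2 * x - omega i ^+ 2)).
  by apply: funext => x.
move=> x; apply: continuousD; first by apply: continuousN => y.
apply: (@continuousM R R (fun=> n%:R^-1)); first exact: cst_continuous.
apply: sum_cont => i y.
apply: (@continuousM R _ (fun=> sigma i) (fun x0 => Num.sqrt (k i ^+ 2 * x0 - omega i ^+ 2))); first exact: cst_continuous.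
apply: (continuous_comp (f := fun y => k i ^+ 2 * y - omega i ^+ 2)); last exact: sqrt_continuous.
apply: continuousD; last exact: cst_continuous.
apply: (@continuousM R R (fun=> k i ^+ 2)); first exact: cst_continuous.
by [].
Qed.

Lemma bound n (omega k sigma : 'I_n -> R) y : (forall i, 0 < k i) -> is_sign sigma -> 0 <= y ->
  n%:R^-1 * \sum_(i < n) sigma i * Num.sqrt (k i ^+ 2 * y - omega i ^+ 2)
  <= (n%:R^-1 * \sum_(i < n) k i) * Num.sqrt y.
Proof.
move=> hk hs y0; rewrite -mulrA; apply: ler_wpM2l; first by rewrite invr_ge0 ler0n.
rewrite mulr_suml; apply: ler_sum => i _.
set s := Num.sqrt _.
have s0 : 0 <= s by apply: sqrtr_ge0.
have h1 : sigma i * s <= s by case: (hs i) => ->; lra.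
apply: (le_trans h1).
have h2 : s <= Num.sqrt (k i ^+ 2 * y).
  apply: ler_wsqrtr; have := sqr_ge0 (omega i); lra.
apply: (le_trans h2); rewrite sqrtrM ?sqr_ge0 // sqrtr_sqr ger0_norm //.
exact: ltW.
Qed.
End H.

Theorem lemma3 (R : realType) (m : nat) (omega k : 'I_m.+2 -> R)
  (hk : forall i, 0 < k i)
  (IC1 : \sum_(i < m.+2) omega i = 0)
  (IC2 : exists i, omega i != 0)
  (IC3 : forall i j : 'I_m.+2, (i <= j)%N -> `|omega i / k i| <= `|omega j / k j|)
  (sigma sigma' : 'I_m.+2 -> R) (mu nu : 'I_m.+2)
  (hsig : is_sign sigma)
  (hmu : sigma mu = 1) (hnu : sigma nu = -1)
  (hmu' : sigma' mu = -1) (hnu' : sigma' nu = 1)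
  (hagree : forall i, i != mu -> i != nu -> sigma' i = sigma i)
  (H1 : (k mu ^+ 2 - k nu ^+ 2) * (omega ord_max / k ord_max) ^+ 2
          >= omega mu ^+ 2 - omega nu ^+ 2)
  (H2 : (k mu ^+ 2 - k nu ^+ 2) * ((m.+2)%:R^-1 * \sum_(i < m.+2) k i) ^+ 2
          >= omega mu ^+ 2 - omega nu ^+ 2) :
  (forall x : R, ~ positive_root omega k sigma x) ->
  (forall x : R, ~ positive_root omega k sigma' x).
Proof.
move=> Hno x [xpos [rad root]].
have munu : mu != nu.
  apply/eqP => E; move: hnu; rewrite -E hmu => h; have : (1:R) = -1 := h; lra.
have signs' : is_sign sigma'.
  move=> i; case: (eqVneq i mu) => [->|imu]; first by right.
  case: (eqVneq i nu) => [->|inu]; first by left.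
  by rewrite hagree //; apply: hsig.
set K := (m.+2)%:R^-1 * \sum_(i < m.+2) k i.
have K0 : 0 <= K.
  apply: mulr_ge0; first by rewrite invr_ge0 ler0n.
  by apply: sumr_ge0 => i _; apply: ltW.
have xK : x <= K ^+ 2.
  have := @bound R _ omega k sigma' x hk signs' (ltW xpos).
  move: root; rewrite /f_sigma => root.
  have -> : (m.+2)%:R^-1 * \sum_(i < m.+2) sigma' i * Num.sqrt (k i ^+ 2 * x - omega i ^+ 2) = x by move/eqP: root; rewrite addrC subr_eq0 => /eqP.
  rewrite -/K.
  have sx : 0 < Num.sqrt x by rewrite sqrtr_gt0.
  have xs : x = Num.sqrt x ^+ 2 by rewrite sqr_sqrtr // ltW.
  rewrite [in X in X <= _ -> _]xs [in X in _ -> X <= _]xs.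
  move: sx; set s := Num.sqrt x => sx hh.
  have sK : s <= K.
    rewrite leNgt; apply/negP => Ks.
    have : K * s < s * s by rewrite ltr_pM2r.
    rewrite -expr2; lra.
  rewrite !expr2; apply: ler_pM => //; exact: ltW.
have xmin : (omega ord_max / k ord_max) ^+ 2 <= x.
  have hk2 : 0 < k ord_max ^+ 2 by rewrite exprn_gt0.
  rewrite expr_div_n ler_pdivrMr //; have := rad ord_max; lra.
have ba : omega mu ^+ 2 - omega nu ^+ 2 <= (k mu ^+ 2 - k nu ^+ 2) * x.
  case: (lerP 0 (k mu ^+ 2 - k nu ^+ 2)) => ha.
    apply: (le_trans H1); exact: ler_wpM2l.
  apply: (le_trans H2); rewrite -/K; apply: ler_wnM2l => //; exact: ltW.
have sq : Num.sqrt (k nu ^+ 2 * x - omega nu ^+ 2) <= Num.sqrt (k mu ^+ 2 * x - omega mu ^+ 2).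
  apply: ler_wsqrtr; lra.
have sums : \sum_(i < m.+2) sigma i * Num.sqrt (k i ^+ 2 * x - omega i ^+ 2)
   - \sum_(i < m.+2) sigma' i * Num.sqrt (k i ^+ 2 * x - omega i ^+ 2)
   = 2 * Num.sqrt (k mu ^+ 2 * x - omega mu ^+ 2) - 2 * Num.sqrt (k nu ^+ 2 * x - omega nu ^+ 2).
  rewrite -sumrB (bigD1 mu) //= (bigD1 nu) /=; last by rewrite eq_sym.
  rewrite big1; last first.
    by move=> i /andP[inu imu]; rewrite hagree // subrr.
  rewrite hmu hmu' hnu hnu'; lra.
have fx : 0 <= f_sigma omega k sigma x.
  move: root; rewrite /f_sigma => root.
  have : 0 <= (m.+2)%:R^-1 * (2 * Num.sqrt (k mu ^+ 2 * x - omega mu ^+ 2) - 2 * Num.sqrt (k nu ^+ 2 * x - omega nu ^+ 2)).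
    apply: mulr_ge0; first by rewrite invr_ge0 ler0n.
    lra.
  rewrite -sums mulrBr.
  move: root; move: (_ %:R^-1) => c; move: (\sum_(i < _) sigma i * _) => A; move: (\sum_(i < _) sigma' i * _) => B. lra.
set X := (K + 1) ^+ 2.
have fX : f_sigma omega k sigma X < 0.
  have := @bound R _ omega k sigma _ hk hsig (sqr_ge0 (K + 1)).
  rewrite -/K -/X sqrtr_sqr ger0_norm; last lra.
  rewrite /f_sigma; move: (_%:R^-1 * \sum_(i < _) sigma i * _) => S hb; rewrite /X; nra.
have xX : x <= X by rewrite /X; nra.
have mm : Num.min (f_sigma omega k sigma x) (f_sigma omega k sigma X) <= 0
   <= Num.max (f_sigma omega k sigma x) (f_sigma omega k sigma X).
  by rewrite ge_min le_max fx (ltW fX) /= orbT.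
have [c cin fc] := IVT xX (continuous_subspaceT (@f_cont R _ omega k sigma)) mm.
move: cin; rewrite in_itv /= => /andP[xc cX].
apply: (Hno c); split; first exact: lt_le_trans xc.
split; last exact: fc.
move=> i; have := rad i; have : k i ^+ 2 * x <= k i ^+ 2 * c by apply: ler_wpM2l; rewrite ?sqr_ge0.
lra.
Qed.
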